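(* Let $K=\mathbb{F}_q$, $S=K[t_1,\ldots,t_s]$, and let $\mathcal{X}=[A_1\times\cdots\times A_s]\subset\mathbb{P}^{s-1}$ be a projective nested cartesian set with $d_i=|A_i|$. Let $\mathcal{L}_d$ be the $K$-vector space spanned by all monomials $t^a\in S_d$ divisible by $t_1$. If $1\leq d\leq\sum_{i=2}^s(d_i-1)$, then $$\max\{|V_{\mathcal{X}}(f)|: f\in\mathcal{L}_d,\ f\notin I(\mathcal{X})\}=\deg(S/I(\mathcal{X}))-(d_{k+2}-\ell+1)d_{k+3}\cdots d_s,$$ where $0\leq k\leq s-2$ and $\ell$ are the integers with $d=\sum_{i=2}^{k+1}(d_i-1)+\ell$ and $1\leq\ell\leq d_{k+2}-1$.
   Context: Projective nested cartesian set: for subsets $A_1,\ldots,A_s$ of $K$, $\mathcal{X}=[A_1\times\cdots\times A_s]$ is the image of $(A_1\times\cdots\times A_s)\setminus\{0\}$ under $K^s\setminus\{0\}\to\mathbb{P}^{s-1}$, $x\mapsto[x]$, and it is required that (i) $\{0,1\}\subset A_i$ for all $i$; (ii) $a/b\in A_j$ whenever $1\leq i<j\leq s$, $a\in A_j$, $0\neq b\in A_i$; (iii) $d_1\leq\cdots\leq d_s$ where $d_i=|A_i|$. $I(\mathcal{X})$ is the ideal generated by the homogeneous polynomials vanishing on $\mathcal{X}$; $V_{\mathcal{X}}(f)$ is the zero set of $f$ in $\mathcal{X}$. For a graded ideal $J$ with Hilbert function $H_J(d)=\dim_K(S_d/J_d)$ and $k=\dim(S/J)$, $\deg(S/J)=(k-1)!\lim_{d\to\infty}H_J(d)/d^{k-1}$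 if $k\geq1$ and $\dim_K(S/J)$ if $k=0$. *)

(* Defs.v *)
From HB Require Import structures.
From mathcomp Require Import all_boot all_order all_algebra all_field.
From mathcomp Require Import mpoly.
Set Implicit Arguments. Unset Strict Implicit. Unset Printing Implicit Defensive.
Import Order.TTheory GRing.Theory Num.Theory.
Local Open Scope ring_scope.

(* Variables t_1..t_s are indexed 0..s-1 by 'I_s ; paper's index i is our i-1. *)
Section ProjNested.
Variables (K : finFieldType) (s : nat).

Definition pt := {ffun 'I_s -> K}.

Definition nested_cartesian (A : 'I_s -> {set K}) : Prop :=
  [/\ (forall i, (0 : K) \in A i /\ (1 : K) \in A i),
      (forall (i j : 'I_s) (a b : K), (i < j)%N -> a \in A j -> b \in A i ->
          b != 0 -> a / b \in A j)
    & (forall i j : 'I_s, (i <= j)%N -> #|A i| <= #|A j|)%N].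

(* canonical representative of the projective point [x] (x <> 0):
   x scaled so that its first nonzero coordinate equals 1 *)
Definition normalize (x : pt) : pt :=
  match [pick i : 'I_s | x i != 0] with
  | Some i => [ffun j => (x i)^-1 * x j]
  | None => x
  end.

(* X = [A_1 x ... x A_s] in P^{s-1}, each projective point represented by its
   normalized representative (bijection with the projective points) *)
Definition projX (A : 'I_s -> {set K}) : {set pt} :=
  [set normalize x | x in [set x : pt | (x != 0) && [forall i, x i \in A i]]].

Definition VX (A : 'I_s -> {set K}) (f : {mpoly K[s]}) : {set pt} :=
  [set x in projX A | f.@[x] == 0].

Definition homog_vanishing (A : 'I_s -> {set K}) (h : {mpoly K[s]}) : Prop :=
  (exists e : nat, h \is e.-homog) /\ (forall x, x \in projX A -> h.@[x] = 0).

Definition in_IX (A : 'I_s -> {set K}) (f : {mpoly K[s]}) : Prop :=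
  exists (r : seq ({mpoly K[s]} * {mpoly K[s]})),
    (forall gh, gh \in r -> homog_vanishing A gh.2) /\
    f = \sum_(gh <- r) gh.1 * gh.2.

(* Hilbert function of S/I(X): H(d) = dim_K S_d / I(X)_d.  Since I(X)_d is the
   kernel of the evaluation map S_d -> K^X, this is the rank of the matrix of
   values of the degree-d monomials at the points of X. *)
Definition bmnm (d : nat) : finType := 'X_{1..s < d.+1}.

Definition hilbX (A : 'I_s -> {set K}) (d : nat) : nat :=
  \rank (\matrix_(i < #|bmnm d|, j < #|projX A|)
           (let m : bmnm d := enum_val i in
            if mdeg m == d then ('X_[val m] : {mpoly K[s]}).@[enum_val j]
            else 0)).

End ProjNested.

(* deg(S/J) from its Hilbert function H, with k = dim(S/J):
   k >= 1 : deg = (k-1)! lim H(d)/d^(k-1) (the limit being finite and positive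
            exactly for k = dim S/J);
   k = 0  : H eventually 0 and deg = dim_K(S/J) = sum_d H(d). *)
Definition is_hdeg (H : nat -> nat) (e : nat) : Prop :=
  (exists k : nat, (1 <= k)%N /\ (0 < e)%N /\
     forall eps : rat, 0 < eps -> exists N : nat, forall d : nat, (N <= d)%N ->
       `| (H d)%:R / (d%:R ^+ k.-1) - e%:R / (k.-1)`!%:R | < eps)
  \/ (exists N : nat, (forall d, (N <= d)%N -> H d = 0%N) /\
        e = (\sum_(d < N) H d)%N).

(* d_i = |A_i| with the paper's 1-based index i (1 <= i <= s) *)
Definition dsz (K : finFieldType) (s : nat) (A : 'I_s -> {set K}) (i : nat) : nat :=
  if (insub i.-1 : option 'I_s) is Some j then #|A j| else 0%N.

(* Main.v *)
Require Import Defs.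
From HB Require Import structures.
From mathcomp Require Import all_boot all_order all_algebra all_field.
From mathcomp Require Import mpoly.
From mathcomp Require Import zify ring.
Set Implicit Arguments. Unset Strict Implicit. Unset Printing Implicit Defensive.
Import Order.TTheory GRing.Theory Num.Theory.
Local Open Scope ring_scope.
Fixpoint gbound (B : seq nat) (E : nat) : nat :=
  if B is b :: B' then
    (if (E < b.-1)%N then ((b - E) * \prod_(c <- B') c)%N else gbound B' (E - b.-1))
  else 1%N.

Lemma gboundM (B : seq nat) (u F : nat) : sorted leq B -> all (fun c => u < c)%N B ->
  (u <= F)%N -> (gbound B (F - u) <= u.+1 * gbound B F)%N.
Proof.
elim: B F => [|c C IH] F; first by rewrite /= muln1.
move=> /= hs /andP[uc hC] uF.
have hsC : sorted leq C by case: C hs {IH hC} => //= c' C' /andP[].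
case: (ltnP F c.-1) => hF.
  rewrite (_ : (F - u < c.-1)%N = true); last by lia.
  rewrite mulnA leq_mul2r; apply/orP; right; nia.
case: (ltnP (F - u) c.-1) => hFu.
  case: C hs hsC hC IH => [|c' C'] hs hsC hC IH /=.
    rewrite big_nil !muln1; lia.
  move: hs => /= /andP[cc' _]; move: hC => /= /andP[uc' _].
  have -> : (F - c.-1 < c'.-1)%N by lia.
  rewrite big_cons mulnA mulnA leq_mul2r; apply/orP; right; nia.
have -> : (F - u - c.-1 = (F - c.-1) - u)%N by lia.
by apply: IH => //; lia.
Qed.

Lemma gboundL (b : nat) (B : seq nat) (E t : nat) : sorted leq (b :: B) ->
  (t <= E)%N -> (t < b)%N -> (gbound (b :: B) E <= (b - t) * gbound B (E - t))%N.
Proof.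
move=> hs tE tb /=.
have hB : all (fun c => b <= c)%N B.
  move: hs => /= /(order_path_min leq_trans); by [].
case: ifP => hE.
  case: B hs hB => [|c C] hs hB /=; first by rewrite big_nil !muln1; lia.
  move: hB => /= /andP[bc _].
  have -> : (E - t < c.-1)%N by lia.
  rewrite big_cons mulnA mulnA leq_mul2r; apply/orP; right; nia.
have -> : (E - b.-1 = (E - t) - (b.-1 - t))%N by lia.
have -> : (b - t = (b.-1 - t).+1)%N by lia.
apply: gboundM.
- by case: B hs {hB} => //= c C /andP[].
- by apply/allP => c /(allP hB); lia.
- lia.
Qed.
Section Core.
Variable K : finFieldType.

Fixpoint mev (m : seq nat) (x : seq K) : K :=
  if m is e :: m' then (head 0 x) ^+ e * mev m' (behead x) else 1.

Definition polyfun (E : nat) (F : seq K -> K) : Prop :=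
  exists r : seq (K * seq nat), (forall p, p \in r -> (sumn p.2 <= E)%N) /\
    forall x, F x = \sum_(p <- r) p.1 * mev p.2 x.

Fixpoint gridseq (As : seq {set K}) : seq (seq K) :=
  if As is A :: As' then [seq a :: y | a <- enum A, y <- gridseq As'] else [:: [::]].

Definition cnt As (F : seq K -> K) : nat := (\sum_(x <- gridseq As) (F x != 0%R))%N.

Lemma sum_gridseq_cons A As (w : seq K -> nat) :
  (\sum_(x <- gridseq (A :: As)) w x = \sum_(a in A) \sum_(y <- gridseq As) w (a :: y))%N.
Proof.
rewrite /= big_flatten big_map big_enum /=; apply: eq_bigr => a _; by rewrite big_map.
Qed.

Lemma mem_gridseq_cons A As x :
  (x \in gridseq (A :: As)) = if x is a :: y then (a \in A) && (y \in gridseq As) else false.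
Proof.
apply/allpairsP/idP => [[[a y] /= [ha hy ->]]|]; first by rewrite -mem_enum ha.
case: x => // a y /andP[ha hy]; exists (a, y) => /=; by rewrite mem_enum.
Qed.

Lemma sum_count (T : Type) (s : seq T) (P : pred T) :
  (\sum_(x <- s) (P x : nat))%N = count P s.
Proof. by elim: s => [|x s IH]; rewrite ?big_nil ?big_cons //= IH. Qed.

Lemma cnt0P As F : cnt As F = 0%N -> forall x, x \in gridseq As -> F x = 0.
Proof.
move=> /eqP h x hx; apply/eqP; apply: contraTT h => Fx.
by rewrite /cnt (big_rem x hx) /= Fx add1n.
Qed.

Lemma cnt_posP As F : (0 < cnt As F)%N -> exists2 x, x \in gridseq As & F x != 0.
Proof.
move=> h; case: (boolP (has (fun x => F x != 0) (gridseq As))) => [/hasP[x hx Fx]|hn].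
  by exists x.
exfalso; move: h; rewrite /cnt big_seq big1 // => x hx.
by apply/eqP; rewrite eqb0; apply: contra hn => Fx; apply/hasP; exists x.
Qed.

Lemma cnt_zero As F : (forall x, x \in gridseq As -> F x = 0) -> cnt As F = 0%N.
Proof. by move=> h; rewrite /cnt big_seq big1 // => x /h ->; rewrite eqxx. Qed.

Lemma mev_cons m a y : mev m (a :: y) = a ^+ (head 0%N m) * mev (behead m) y.
Proof. by case: m => [|e m] /=; rewrite ?expr0 ?mulr1. Qed.

Lemma sumn_head (m : seq nat) : sumn m = (head 0%N m + sumn (behead m))%N.
Proof. by case: m. Qed.

Lemma decomp E F (A : {set K}) : polyfun E F -> exists Fs : nat -> seq K -> K,
  [/\ forall j, polyfun (E - j) (Fs j), forall j y, (E < j)%N -> Fs j y = 0 &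
      forall a y, a \in A -> F (a :: y) = \sum_(j < #|A|) a ^+ j * Fs j y].
Proof.
case=> r [hr hF].
pose Z : {poly K} := \prod_(al <- enum A) ('X - al%:P).
pose rr e := 'X^e %% Z.
have Z0 : Z != 0 by rewrite monic_neq0 // monic_prod_XsubC.
have sZ : size Z = #|A|.+1 by rewrite size_prod_XsubC cardE.
have srrA e : (size (rr e) <= #|A|)%N.
  by rewrite -ltnS -sZ ltn_modp.
have srre e : (size (rr e) <= e.+1)%N.
  by rewrite (leq_trans (leq_modp _ _)) // size_polyXn.
have rrev e a : a \in A -> (rr e).[a] = a ^+ e.
  move=> ha; have := divp_eq 'X^e Z; move/(congr1 (horner^~ a)).
  rewrite hornerD hornerM hornerXn.
  have -> : Z.[a] = 0.
    rewrite horner_prod; apply/eqP; rewrite prodf_seq_eq0; apply/hasP.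
    by exists a; rewrite ?mem_enum // hornerXsubC subrr eqxx.
  by rewrite mulr0 add0r => ->.
pose Fs j y := \sum_(p <- r) p.1 * (rr (head 0%N p.2))`_j * mev (behead p.2) y.
pose rj j := [seq (p.1 * (rr (head 0%N p.2))`_j, behead p.2) | p <- r & (j <= head 0%N p.2)%N].
have hrj j q : q \in rj j -> (sumn q.2 + j <= E)%N.
  case/mapP => -[c m]; rewrite mem_filter => /andP[hj hp] -> /=.
  move: (hr _ hp) hj => /=; case: m {hp} => [|e m] /=; lia.
have Fsrj j y : Fs j y = \sum_(q <- rj j) q.1 * mev q.2 y.
  rewrite big_map big_filter big_mkcond /=; apply: eq_bigr => p _.
  case: ifP => // hj; rewrite nth_default ?mulr0 ?mul0r //.
  by rewrite (leq_trans (srre _)) // ltnNge hj.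
exists Fs; split.
- move=> j; exists (rj j); split; last exact: Fsrj.
  by move=> [c m] /hrj /=; lia.
- move=> j y hj; rewrite Fsrj big_seq big1 // => -[c m] /hrj /=; lia.
- move=> a y ha; rewrite hF.
  have -> : \sum_(j < #|A|) a ^+ j * Fs j y = \sum_(j < #|A|) \sum_(p <- r)
      a ^+ j * (p.1 * (rr (head 0%N p.2))`_j * mev (behead p.2) y).
    by apply: eq_bigr => j _; rewrite mulr_sumr.
  rewrite exchange_big /=; apply: eq_bigr => p _.
  rewrite mev_cons -(rrev _ _ ha) (horner_coef_wide _ (srrA _)).
  rewrite mulr_suml mulr_sumr; apply: eq_bigr => j _; ring.
Qed.


Lemma cnt_cons A As F :
  cnt (A :: As) F = (\sum_(a in A) cnt As (fun y => F (a :: y)))%N.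
Proof. by rewrite /cnt sum_gridseq_cons. Qed.

Lemma AF_point (A : {set K}) As' (Fs : nat -> seq K -> K) F t y :
  (forall a y, a \in A -> F (a :: y) = \sum_(j < #|A|) a ^+ j * Fs j y) ->
  (t < #|A|)%N ->
  (forall j, (t < j < #|A|)%N -> cnt As' (Fs j) = 0%N) ->
  y \in gridseq As' -> Fs t y != 0 ->
  (#|A| - t <= \sum_(a in A) (F (a :: y) != 0%R))%N.
Proof.
move=> hF tA hz hy Ft.
pose q := \poly_(j < t.+1) Fs j y.
have hq a : a \in A -> F (a :: y) = q.[a].
  move=> ha; rewrite hF // horner_poly.
  rewrite -(big_mkord xpredT (fun j => a ^+ j * Fs j y)).
  rewrite -(big_mkord xpredT (fun j => Fs j y * a ^+ j)).
  rewrite (big_cat_nat _ (n := t.+1)) //=.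
  have -> : \sum_(t.+1 <= i < #|A|) a ^+ i * Fs i y = 0.
    rewrite big_nat big1 // => j /andP[h1 h2]; rewrite (cnt0P (hz j _) hy) ?mulr0 //; lia.
  by rewrite addr0; apply: eq_bigr => j _; rewrite mulrC.
have q0 : q != 0.
  apply/eqP => /(congr1 (fun p : {poly K} => p`_t)); rewrite coef_poly ltnSn coef0.
  by move/eqP; rewrite (negbTE Ft).
have sq : (size q <= t.+1)%N by apply: size_poly.
pose rs := [seq a <- enum A | q.[a] == 0].
have hrs : (size rs < size q)%N.
  apply: max_poly_roots q0 _ _.
    by apply/allP => a; rewrite mem_filter => /andP[/eqP h _]; apply/eqP.
  by rewrite filter_uniq // enum_uniq.
rewrite -big_enum /= (eq_big_seq (fun a => (q.[a] != 0 : nat))); last first.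
  by move=> a; rewrite mem_enum => ha; rewrite hq.
rewrite sum_count.
have := count_predC (fun a => q.[a] != 0) (enum A).
rewrite -cardE.
have -> : count (predC (fun a => q.[a] != 0)) (enum A) = size rs.
  by rewrite size_filter; apply: eq_count => a /=; rewrite negbK.
move=> h; rewrite -h.
apply: (@leq_trans (count (fun a => q.[a] != 0) (enum A))); last exact: leqnn.
lia.
Qed.

Theorem AF As : forall E F, sorted leq (map (fun A : {set K} => #|A|) As) -> polyfun E F ->
  (0 < cnt As F)%N -> (gbound (map (fun A : {set K} => #|A|) As) E <= cnt As F)%N.
Proof.
elim: As => [|A As IH] E F hs hF hc /=; first by [].
have hs' : sorted leq (map (fun A : {set K} => #|A|) As).
  by move: hs => /= /path_sorted.
case: (decomp A hF) => Fs [hFs hFz hFA].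
have ex : exists j, (j < #|A|)%N && (0 < cnt As (Fs j))%N.
  case: (boolP [exists j : 'I_#|A|, (0 < cnt As (Fs j))%N]) => [/existsP[j hj]|hn].
    by exists j; rewrite ltn_ord.
  exfalso; case: (cnt_posP hc) => x; rewrite mem_gridseq_cons.
  case: x => // a y /andP[ha hy]; rewrite hFA // big1 ?eqxx // => j _.
  have hj0 : cnt As (Fs j) = 0%N.
    apply/eqP; rewrite -leqn0 leqNgt.
    by apply: contra hn => h; apply/existsP; exists j.
  by rewrite (cnt0P hj0 hy) mulr0.
have ub : forall j, (j < #|A|)%N && (0 < cnt As (Fs j))%N -> (j <= #|A|)%N.
  by move=> j /andP[h _]; apply: ltnW.
case: (ex_maxnP ex ub) => t /andP[tA ht] tmax.
have tE : (t <= E)%N.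
  rewrite leqNgt; apply/negP => hEt; move: ht; rewrite cnt_zero // => y _.
  exact: hFz.
apply: (leq_trans (gboundL hs tE tA)).
apply: (@leq_trans ((#|A| - t) * cnt As (Fs t))).
  by rewrite leq_mul2l IH ?orbT.
rewrite cnt_cons /cnt big_distrr /= exchange_big /= big_seq [X in (_ <= X)%N]big_seq.
apply: leq_sum => y hy.
case: (boolP (Fs t y != 0)) => Ft; last by rewrite muln0.
rewrite muln1.
apply: AF_point hFA tA _ hy Ft => j /andP[h1 h2].
apply/eqP; rewrite -leqn0 leqNgt; apply/negP => hp.
have := tmax j; rewrite h2 hp => /(_ isT); lia.
Qed.

Definition polyfunS (N E : nat) (F : seq K -> K) : Prop :=
  exists r : seq (K * seq nat), (forall p, p \in r -> (sumn p.2 <= E)%N /\ (size p.2 <= N)%N) /\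
    forall x, F x = \sum_(p <- r) p.1 * mev p.2 x.

Lemma polyfun_mono N N' E E' F : (N <= N')%N -> (E <= E')%N -> polyfunS N E F -> polyfunS N' E' F.
Proof. move=> hN h [r [hr hF]]; exists r; split => // -[c m] /hr /= [h1 h2]; split; lia. Qed.

Lemma polyfun_const1 : polyfunS 0 0 (fun _ => 1).
Proof. by exists [:: (1, [::])]; split => [p|x]; rewrite ?inE ?big_seq1 ?mulr1 // => /eqP ->. Qed.

Lemma polyfun_cons N (q : {poly K}) e E G : (size q <= e.+1)%N -> polyfunS N E G ->
  polyfunS N.+1 (e + E) (fun x => q.[head 0 x] * G (behead x)).
Proof.
move=> sq [r [hr hG]].
exists [seq (q`_j * p.1, j :: p.2) | j <- iota 0 (size q), p <- r]; split.
  move=> p /allpairsP[[j [c m]] /= [hj hp' ->]] /=.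
  move: hj (hr _ hp'); rewrite mem_iota add0n /= => hj [h2 h3]; split => //.
  by apply: leq_add => //; rewrite -ltnS (leq_trans hj sq).
move=> x; rewrite big_flatten big_map (horner_coef q) big_distrl /=.
rewrite -(big_mkord xpredT (fun i => q`_i * head 0 x ^+ i * G (behead x))) /index_iota subn0.
apply: eq_bigr => j _.
rewrite big_map hG mulr_sumr; apply: eq_bigr => p _ /=; ring.
Qed.

Lemma cnt_scale As c G : cnt As (fun y => c * G y) = ((c != 0%R) * cnt As G)%N.
Proof.
rewrite /cnt big_distrr /=; apply: eq_bigr => y _.
by rewrite mulf_eq0 negb_or; case: (c == 0); case: (G y == 0).
Qed.

Lemma count_notin_take (s : seq K) m : uniq s -> (m <= size s)%N ->
  count (fun a => a \notin take m s) s = (size s - m)%N.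
Proof.
move=> us hm; rewrite -[X in count _ X](cat_take_drop m s) count_cat.
have := us; rewrite -{1}(cat_take_drop m s) cat_uniq => /and3P[_ hn _].
rewrite (eq_in_count (a2 := pred0)); last by move=> a ->.
rewrite count_pred0 add0n (eq_in_count (a2 := predT)) ?count_predT ?size_drop //.
by move=> a ha /=; apply: contra hn => h; apply/hasP; exists a.
Qed.

Lemma cnt_take (A : {set K}) As m G : (m <= #|A|)%N ->
  cnt (A :: As) (fun x => (\prod_(al <- take m (enum A)) ('X - al%:P)).[head 0 x] * G (behead x))
  = ((#|A| - m) * cnt As G)%N.
Proof.
move=> hm; rewrite cnt_cons /=.
under eq_bigr => a _ do rewrite cnt_scale.
rewrite -big_distrl /= -big_enum /= sum_count.
rewrite (eq_count (a2 := fun a => a \notin take m (enum A))); last first.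
  by move=> a /=; rewrite -rootE root_prod_XsubC.
by rewrite count_notin_take ?enum_uniq // -?cardE.
Qed.

Lemma cnt_const1 As : cnt As (fun _ => 1) = (\prod_(A <- As) #|A|)%N.
Proof.
elim: As => [|A As IH]; first by rewrite /cnt /= big_seq1 big_nil oner_neq0.
by rewrite cnt_cons big_cons sum_nat_const IH.
Qed.

Theorem AF_exact As : all (fun A : {set K} => 0 < #|A|)%N As -> forall E,
  exists F, polyfunS (size As) E F /\ cnt As F = gbound (map (fun A : {set K} => #|A|) As) E.
Proof.
elim: As => [|A As IH] hA E.
  exists (fun _ => 1); split; first by apply: (polyfun_mono _ _ polyfun_const1).
  by rewrite /cnt /= big_seq1 oner_neq0.
move: hA => /= /andP[hA0 hAs].
case: (ltnP E #|A|.-1) => hE.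
  exists (fun x => (\prod_(al <- take E (enum A)) ('X - al%:P)).[head 0 x] * 1).
  split.
    rewrite -[E]addn0; apply: (polyfun_cons _ (polyfun_mono (N' := size As) _ (leqnn _) polyfun_const1)) => //.
    by rewrite size_prod_XsubC size_take -cardE; case: ifP; lia.
  rewrite (@cnt_take A As E (fun _ => 1)); last by lia.
  by rewrite cnt_const1 big_map.
case: (IH hAs (E - #|A|.-1)%N) => G [hG hc].
exists (fun x => (\prod_(al <- take #|A|.-1 (enum A)) ('X - al%:P)).[head 0 x] * G (behead x)).
split.
  have -> : E = (#|A|.-1 + (E - #|A|.-1))%N by lia.
  apply: polyfun_cons hG.
  by rewrite size_prod_XsubC size_take -cardE; case: ifP; lia.
rewrite cnt_take; last by lia.
rewrite hc (_ : (#|A| - #|A|.-1 = 1)%N) ?mul1n //.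
have h1 : (0 < #|A|)%N := hA0. lia.
Qed.

End Core.

Section Proj.
Variables (K : finFieldType) (s : nat) (A : 'I_s -> {set K}).

Lemma normalizeE (x : pt K s) : normalize x =
  if [pick i | x i != 0] is Some i then [ffun j => (x i)^-1 * x j] else x.
Proof. by []. Qed.

Lemma normalize_scale (x : pt K s) c : c != 0 -> normalize [ffun j => c * x j] = normalize x.
Proof.
move=> c0; rewrite !normalizeE.
have eqp : (fun i => [ffun j => c * x j] i != 0) =1 (fun i => x i != 0).
  by move=> i; rewrite ffunE mulf_eq0 negb_or c0.
rewrite (eq_pick eqp); case: pickP => [i hi|h].
  by apply/ffunP => j; rewrite !ffunE invfM mulrACA mulVf // mul1r.
apply/ffunP => j; rewrite ffunE; have := h j => /= /negbFE/eqP ->; by rewrite mulr0.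
Qed.

Lemma normalize_idem (x : pt K s) : normalize (normalize x) = normalize x.
Proof.
case hp: [pick i | x i != 0] => [i|].
  have hi : x i != 0 by move: hp; case: pickP => // j hj [<-].
  have nx : normalize x = [ffun j => (x i)^-1 * x j] by rewrite normalizeE hp.
  by rewrite nx normalize_scale ?invr_eq0 // nx.
have nx : normalize x = x by rewrite normalizeE hp.
by rewrite !nx.
Qed.

Lemma projX_fix x : x \in projX A -> normalize x = x.
Proof. by case/imsetP => z _ ->; rewrite normalize_idem. Qed.

Lemma projX_one x : x \in projX A -> exists i, x i = 1.
Proof.
case/imsetP => z; rewrite inE => /andP[z0 _] ->; rewrite normalizeE.
case: pickP => [i hi|h]; first by exists i; rewrite ffunE mulVf.
exfalso; move/negP: z0; apply; apply/eqP/ffunP => j; rewrite ffunE.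
by have := h j => /= /negbFE/eqP.
Qed.

Lemma proj_eq x P c : x \in projX A -> P \in projX A -> c != 0 ->
  x = [ffun j => c * P j] -> x = P.
Proof.
move=> hx hP c0 e; by rewrite -(projX_fix hx) e normalize_scale // projX_fix.
Qed.

Lemma card_K_gt1 : (1 < #|K|)%N.
Proof.
have := subset_leq_card (subsetT [set (0 : K); 1]).
by rewrite cards2 eq_sym oner_eq0 cardsT.
Qed.

Lemma pow_q1 (y : K) : y ^+ (#|K|.-1) = (y != 0)%:R.
Proof.
have h1 := card_K_gt1.
case: (eqVneq y 0) => [->|y0] /=.
  have hq : (#|K|.-1 != 0)%N by lia.
  by rewrite expr0n (negbTE hq).
apply: (mulIf y0); rewrite mul1r -exprSr prednK ?expf_card //; exact: ltnW h1.
Qed.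

Lemma dhomog_prod_seq (I : Type) (r : seq I) (F : I -> {mpoly K[s]}) e :
  (forall i, F i \is e.-homog) -> \prod_(i <- r) F i \is (e * size r).-homog.
Proof.
move=> h; elim: r => [|x r IH]; first by rewrite big_nil muln0 dhomog1.
rewrite big_cons /= mulnS; exact: dhomogM.
Qed.

Definition hsep (P : pt K s) (i : 'I_s) (e : nat) : {mpoly K[s]} :=
  ((P i ^+ e)^-1) *: ('X_i ^+ e * \prod_(j < s)
     ('X_i ^+ #|K|.-1 - (P i *: 'X_j - P j *: 'X_i) ^+ #|K|.-1)).

Lemma dhomogXi (i : 'I_s) : ('X_i : {mpoly K[s]}) \is 1.-homog.
Proof. by rewrite dhomogX; apply/eqP; exact: mdeg1. Qed.

Lemma hsep_homog P i e : hsep P i e \is (e + #|K|.-1 * s).-homog.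
Proof.
apply: dhomogZ; apply: dhomogM.
  by have := dhomogMn e (dhomogXi i); rewrite mul1n.
have hs : size (index_enum 'I_s) = s by rewrite [index_enum _]unlock -enumT size_enum_ord.
rewrite -[X in (_ * X)%N]hs.
apply: dhomog_prod_seq => j.
have h1 := dhomogMn #|K|.-1 (dhomogXi i); rewrite mul1n in h1.
apply: rpredB => //.
have h2 : (P i *: 'X_j - P j *: 'X_i : {mpoly K[s]}) \is 1.-homog.
  by apply: rpredB; apply: dhomogZ; apply: dhomogXi.
by have := dhomogMn #|K|.-1 h2; rewrite mul1n.
Qed.

Lemma hsep_val P i e x : P \in projX A -> x \in projX A -> P i != 0 -> (0 < e)%N ->
  (hsep P i e).@[x] = (x == P)%:R.
Proof.
move=> hP hx Pi e0.
rewrite /hsep mevalZ mevalM rmorphXn /= mevalXU rmorph_prod /=.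
under eq_bigr => j _ do rewrite mevalB !rmorphXn /= mevalB !mevalZ !mevalXU !pow_q1.
case: (eqVneq x P) => [->|xP] /=.
  rewrite big1 ?mulr1 ?mulVf ?expf_neq0 // => j _.
  by rewrite Pi mulrC subrr eqxx subr0.
case: (eqVneq (x i) 0) => [xi0|xi0].
  by rewrite xi0 expr0n; case: e e0 => // e _; rewrite mul0r mulr0.
case: (boolP [exists j, P i * x j - P j * x i != 0]) => [/existsP[j hj]|hn].
  by rewrite (bigD1 j) //= hj subrr mul0r !mulr0.
exfalso; move/eqP: xP; apply; apply: (proj_eq hx hP (c := x i / P i)).
  by rewrite mulf_neq0 ?invr_eq0.
apply/ffunP => j; rewrite ffunE.
have := hn; rewrite negb_exists => /forallP/(_ j); rewrite negbK subr_eq0 => /eqP h.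
by apply: (mulfI Pi); rewrite h; field.
Qed.


Lemma homog_msize (h : {mpoly K[s]}) D : h \is D.-homog -> (msize h <= D.+1)%N.
Proof.
move=> hh; rewrite msizeE; apply/bigmax_leqP_seq => m hm _.
by rewrite (dhomog_mf hh hm).
Qed.

Lemma hilbX_eq d : (#|K|.-1 * s < d)%N -> hilbX A d = #|projX A|.
Proof.
move=> hd; apply/eqP; rewrite eqn_leq rank_leq_col /=.
rewrite /hilbX.
set M := (\matrix_(i < _, j < _) _).
pose e := (d - #|K|.-1 * s)%N.
have de : d = (e + #|K|.-1 * s)%N by rewrite /e; lia.
have e0 : (0 < e)%N by rewrite /e; lia.
pose hP (P : pt K s) : {mpoly K[s]} := if [pick i | P i != 0] is Some i then hsep P i e else 0.
pose D := \matrix_(j0 < #|projX A|, i < #|Defs.bmnm s d|) (hP (enum_val j0))@_(val (enum_val i)).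
have DM : D *m M = 1%:M.
  apply/matrixP => j0 j; rewrite !mxE.
  under eq_bigr => k _ do rewrite !mxE.
  have hPX : enum_val j0 \in projX A := enum_valP j0.
  have hxX : enum_val j \in projX A := enum_valP j.
  have [i [hPi Pi]] : exists i, hP (enum_val j0) = hsep (enum_val j0) i e /\ enum_val j0 i != 0.
    rewrite /hP; case: pickP => [i hi|h]; first by exists i.
    case: (projX_one hPX) => i hi; by move: (h i); rewrite hi oner_neq0.
  have hh : hP (enum_val j0) \is d.-homog by rewrite hPi de; apply: hsep_homog.
  rewrite -(big_enum_val (fun m : Defs.bmnm s d => (hP (enum_val j0))@_(val m) *
     (if mdeg m == d then ('X_[val m] : {mpoly K[s]}).@[enum_val j] else 0))) /=.
  have -> : (j0 == j) = (enum_val j == enum_val j0).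
    by rewrite eq_sym; apply/eqP/eqP => [->|/enum_val_inj].
  rewrite -(hsep_val hPX hxX Pi e0) -hPi.
  rewrite {2}(mpolywE (homog_msize hh)) rmorph_sum /=.
  apply: eq_bigr => m _; rewrite mevalZ.
  case: ifP => // /eqP hm.
  by rewrite (dhomog_nemf_coeff hh) ?mul0r //; apply/eqP.
have := mxrankM_maxr D M; rewrite DM mxrank1 => h.
exact: h.
Qed.

End Proj.

Lemma pick_ord0 n (P : pred 'I_n.+1) : P ord0 -> [pick i | P i] = Some ord0.
Proof. by move=> h; rewrite /pick /enum_mem -enumT enum_ordSl /= unfold_in h. Qed.

Lemma mev_prod (K : finFieldType) N (ms : seq nat) (y : seq K) : (size ms <= N)%N ->
  mev ms y = \prod_(i < N) (nth 0 y i) ^+ (nth 0%N ms i).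
Proof.
elim: ms N y => [|e ms IH] N y /=.
  by move=> _; rewrite big1 // => i _; rewrite nth_nil expr0.
case: N => // N hs; rewrite big_ord_recl /= (IH N) //; congr (_ * _).
by apply: eq_bigr => i _; rewrite nth_behead /bump /= add1n.
Qed.

Lemma sumn_nth N (ms : seq nat) : (size ms <= N)%N -> (\sum_(i < N) nth 0%N ms i = sumn ms)%N.
Proof.
elim: ms N => [|e ms IH] N /=.
  by move=> _; rewrite big1 // => i _; rewrite nth_nil.
case: N => // N hs; rewrite big_ord_recl /= -(IH N) //; congr (_ + _)%N.
Qed.

Lemma mem_gridseqP (K : finFieldType) (As : seq {set K}) y :
  reflect (size y = size As /\ forall j, (j < size As)%N -> nth 0 y j \in nth set0 As j)
          (y \in gridseq As).
Proof.
elim: As y => [|A As IH] y.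
  rewrite /= inE; apply: (iffP eqP) => [->|[h _]] //; by case: y h.
rewrite mem_gridseq_cons; case: y => [|a y] /=.
  by constructor => -[].
apply: (iffP andP) => [[ha /IH[h1 h2]]|[[h1] h2]].
  by split; [rewrite h1|case => //= j /h2].
split; first exact: (h2 0%N).
by apply/IH; split => // j hj; apply: (h2 j.+1).
Qed.

Lemma sum_bool_card (T : finType) (X : {set T}) (b : pred T) :
  (\sum_(x in X) (b x : nat))%N = #|[set x in X | b x]|.
Proof.
rewrite -sum1_card big_mkcond /= [RHS]big_mkcond /=; apply: eq_bigr => x _.
by rewrite inE; case: (x \in X); case: (b x).
Qed.

Lemma gridseq_uniq (K : finFieldType) (As : seq {set K}) : uniq (gridseq As).
Proof.
elim: As => [|A As IH] //=; apply: allpairs_uniq => //; first exact: enum_uniq.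
by move=> [a y] [b z] _ _ /= [-> ->].
Qed.

Section Glue.
Variables (K : finFieldType) (n : nat) (A : 'I_n.+1 -> {set K}).

Definition Asr : seq {set K} := [seq A (lift ord0 j) | j <- enum 'I_n].
Definition phi (y : seq K) : pt K n.+1 :=
  [ffun i : 'I_n.+1 => if i == ord0 then 1 else nth 0 y i.-1].
Definition psi (x : pt K n.+1) : seq K := [seq x (lift ord0 j) | j <- enum 'I_n].

Lemma size_Asr : size Asr = n.
Proof. by rewrite size_map size_enum_ord. Qed.

Lemma nth_Asr (j : 'I_n) : nth set0 Asr j = A (lift ord0 j).
Proof.
rewrite (nth_map j) ?size_enum_ord // (_ : nth j (enum 'I_n) j = j) //.
by apply: val_inj; rewrite /= nth_enum_ord.
Qed.

Lemma phi_o y : phi y ord0 = 1.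
Proof. by rewrite ffunE eqxx. Qed.

Lemma phi_lift y (j : 'I_n) : phi y (lift ord0 j) = nth 0 y j.
Proof. by rewrite ffunE eq_sym (negbTE (neq_lift _ _)) lift0. Qed.

Lemma psi_phi y : size y = n -> psi (phi y) = y.
Proof.
move=> hy; rewrite /psi (eq_map (phi_lift y)).
have -> : [seq nth 0 y (nat_of_ord j) | j <- enum 'I_n] = map (nth 0 y) (map val (enum 'I_n)).
  by rewrite -map_comp.
rewrite val_enum_ord.
by rewrite -hy -/(mkseq (nth 0 y) (size y)) mkseq_nth.
Qed.

Lemma mem_grid y : (y \in gridseq Asr) = (size y == n) && [forall j : 'I_n, nth 0 y j \in A (lift ord0 j)].
Proof.
apply/idP/idP.
  move/mem_gridseqP; rewrite size_Asr => -[h1 h2]; apply/andP; split; first by apply/eqP.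
  by apply/forallP => j; rewrite -nth_Asr h2.
case/andP => /eqP h1 /forallP h2; apply/mem_gridseqP; rewrite size_Asr; split => // j hj.
by rewrite (nth_Asr (Ordinal hj)); apply: h2.
Qed.

Hypothesis hA : nested_cartesian A.

Lemma phi_in y : y \in gridseq Asr -> phi y \in projX A.
Proof.
rewrite mem_grid => /andP[_ /forallP hy].
case: hA => h01 _ _.
have fix1 : normalize (phi y) = phi y.
  rewrite normalizeE (pick_ord0 (P := fun i => phi y i != 0)); last by rewrite phi_o oner_neq0.
  by apply/ffunP => i; rewrite ffunE phi_o invr1 mul1r.
rewrite -fix1; apply: imset_f; rewrite inE; apply/andP; split.
  apply/eqP => /ffunP/(_ ord0); rewrite phi_o ffunE => /eqP; by rewrite oner_eq0.
apply/forallP => i; case: (unliftP ord0 i) => [j ->|->].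
  by rewrite phi_lift.
by rewrite phi_o; case: (h01 ord0).
Qed.

Lemma projX_o x : x \in projX A -> x ord0 != 0 ->
  x ord0 = 1 /\ forall j : 'I_n, x (lift ord0 j) \in A (lift ord0 j).
Proof.
case: hA => h01 hdiv _.
case/imsetP => z; rewrite inE => /andP[z0 /forallP hz] ->.
case: (eqVneq (z ord0) 0) => zo.
  by rewrite normalizeE; case: pickP => [i hi|h]; rewrite ?ffunE zo ?mulr0 eqxx.
rewrite normalizeE (pick_ord0 (P := fun i => z i != 0) zo) => _.
split; first by rewrite ffunE mulVf.
move=> j; rewrite ffunE mulrC; apply: hdiv => //; by rewrite lift0.
Qed.

Lemma psi_in x : x \in projX A -> x ord0 != 0 -> psi x \in gridseq Asr /\ phi (psi x) = x.
Proof.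
move=> hx ho; case: (projX_o hx ho) => h1 h2.
have sz : size (psi x) = n by rewrite size_map size_enum_ord.
have npsi (j : 'I_n) : nth 0 (psi x) j = x (lift ord0 j).
  rewrite (nth_map j) ?size_enum_ord // (_ : nth j (enum 'I_n) j = j) //.
  by apply: val_inj; rewrite /= nth_enum_ord.
split.
  rewrite mem_grid sz eqxx /=; apply/forallP => j; by rewrite npsi.
apply/ffunP => i; case: (unliftP ord0 i) => [j ->|->].
  by rewrite phi_lift npsi.
by rewrite phi_o h1.
Qed.


Lemma vanish_o (f : {mpoly K[n.+1]}) x : (forall m, m \in msupp f -> (0 < m ord0)%N) ->
  x ord0 = 0 -> f.@[x] = 0.
Proof.
move=> hm xo; rewrite mevalE big_seq big1 // => m /hm hmo.
rewrite (bigD1 ord0) //= xo expr0n.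
have -> : (m ord0 == 0%N) = false by rewrite eqn0Ngt hmo.
by rewrite mul0r mulr0.
Qed.

Lemma count_glue (f : {mpoly K[n.+1]}) : (forall m, m \in msupp f -> (0 < m ord0)%N) ->
  (#|VX A f| + cnt Asr (fun y => f.@[phi y]) = #|projX A|)%N.
Proof.
move=> hm.
have e1 : cnt Asr (fun y => f.@[phi y]) = (\sum_(x in projX A) (f.@[x] != 0%R : nat))%N.
  rewrite /cnt -(big_map phi xpredT (fun x => (f.@[x] != 0 : nat))).
  set X1 := [set x in projX A | x ord0 != 0].
  have hperm : perm_eq (map phi (gridseq Asr)) (enum X1).
    apply: uniq_perm.
    - rewrite map_inj_in_uniq ?gridseq_uniq //.
      move=> y1 y2 h1 h2 e.
      move: h1 h2; rewrite !mem_grid => /andP[/eqP s1 _] /andP[/eqP s2 _].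
      by rewrite -(psi_phi s1) -(psi_phi s2) e.
    - exact: enum_uniq.
    - move=> x; rewrite mem_enum inE; apply/mapP/andP => [[y hy ->]|[hx ho]].
        by split; [exact: phi_in | rewrite phi_o oner_neq0].
      by exists (psi x); [exact: (psi_in hx ho).1 | rewrite (psi_in hx ho).2].
  rewrite (perm_big _ hperm) big_enum /= [RHS](bigID (fun x : pt K n.+1 => x ord0 != 0)) /=.
  rewrite [X in _ = (_ + X)%N]big1 ?addn0; first by apply: eq_bigl => x; rewrite inE.
  move=> x /andP[_ /negPn/eqP xo]; by rewrite vanish_o // eqxx.
rewrite e1 sum_bool_card /VX.
rewrite -(cardsID [set x : pt K n.+1 | f.@[x] == 0] (projX A)); congr (_ + _)%N; apply: eq_card => x;
  rewrite !inE; by case: (x \in projX A); case: (f.@[x] == 0).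
Qed.

Lemma polyfun_of (f : {mpoly K[n.+1]}) d : f \is d.-homog ->
  (forall m, m \in msupp f -> (0 < m ord0)%N) -> polyfun d.-1 (fun y => f.@[phi y]).
Proof.
move=> hh hm.
pose ms (m : 'X_{1..n.+1}) := [seq m (lift ord0 j) | j <- enum 'I_n].
have nms m (j : 'I_n) : nth 0%N (ms m) j = m (lift ord0 j).
  rewrite (nth_map j) ?size_enum_ord // (_ : nth j (enum 'I_n) j = j) //.
  by apply: val_inj; rewrite /= nth_enum_ord.
exists [seq (f@_m, ms m) | m <- msupp f]; split.
  move=> p /mapP[m hmf ->] /=.
  have hd : mdeg m = d by have := dhomog_mf hh hmf.
  have : (m ord0 + sumn (ms m) = mdeg m)%N.
    rewrite mdegE big_ord_recl sumnE big_map; congr (_ + _)%N.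
    by rewrite [index_enum _]unlock -enumT.
  have := hm _ hmf; lia.
move=> y; rewrite mevalE [RHS]big_map; apply: eq_bigr => m _ /=; congr (_ * _).
rewrite big_ord_recl phi_o expr1n mul1r (mev_prod (N := n)); last first.
  by rewrite size_map -?enumT size_enum_ord.
by apply: eq_bigr => j _; rewrite phi_lift nms.
Qed.

Lemma lift_poly d (r : seq (K * seq nat)) : (0 < d)%N ->
  (forall p, p \in r -> (sumn p.2 <= d.-1)%N /\ (size p.2 <= n)%N) ->
  exists f : {mpoly K[n.+1]}, [/\ f \is d.-homog,
    (forall m, m \in msupp f -> (0 < m ord0)%N) &
    forall y, f.@[phi y] = \sum_(p <- r) p.1 * mev p.2 y].
Proof.
move=> d0 hr.
pose mon (ms : seq nat) : 'X_{1..n.+1} :=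
  [multinom (if i == ord0 then (d - sumn ms) else nth 0 ms i.-1)%N | i < n.+1].
have mon_o ms : mon ms ord0 = (d - sumn ms)%N by rewrite mnmE eqxx.
have mon_l ms (j : 'I_n) : mon ms (lift ord0 j) = nth 0%N ms j.
  by rewrite mnmE eq_sym (negbTE (neq_lift _ _)) lift0.
have mon_deg ms : (sumn ms <= d.-1)%N -> (size ms <= n)%N -> mdeg (mon ms) = d.
  move=> h1 h2; rewrite mdegE big_ord_recl mon_o.
  under eq_bigr => j _ do rewrite mon_l.
  rewrite (sumn_nth h2); lia.
exists (\sum_(p <- r) p.1 *: 'X_[mon p.2]); split.
- rewrite big_seq; apply: rpred_sum => p hp; apply: dhomogZ; rewrite dhomogX; apply/eqP.
  by case: (hr p hp) => h1 h2; apply: mon_deg.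
- move=> m; rewrite mcoeff_msupp raddf_sum /=.
  apply: contraTT; rewrite -leqNgt leqn0 => /eqP mo; apply/negPn/eqP.
  rewrite big_seq big1 // => p hp; rewrite mcoeffZ mcoeffX.
  have -> : (mon p.2 == m) = false.
    apply/eqP => e; have := mon_o p.2; rewrite e mo; case: (hr p hp) => h1 _; lia.
  by rewrite mulr0.
- move=> y; rewrite rmorph_sum /= !big_seq; apply: eq_bigr => p hp; rewrite mevalZ mevalX.
  rewrite big_ord_recl phi_o expr1n mul1r (mev_prod (N := n)); last by case: (hr p hp).
  by congr (_ * _); apply: eq_bigr => j _; rewrite phi_lift mon_l.
Qed.

Lemma inIX_vanish (f : {mpoly K[n.+1]}) : in_IX A f -> forall x, x \in projX A -> f.@[x] = 0.
Proof.
case=> r [hr ->] x hx; rewrite rmorph_sum /= big_seq big1 // => gh hgh.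
by rewrite mevalM; case: (hr _ hgh) => _ h; rewrite h // mulr0.
Qed.

Lemma vanish_inIX (f : {mpoly K[n.+1]}) e : f \is e.-homog ->
  (forall x, x \in projX A -> f.@[x] = 0) -> in_IX A f.
Proof.
move=> hh hv; exists [:: (1, f)]; split; last by rewrite big_seq1 /= mul1r.
by move=> gh; rewrite inE => /eqP -> /=; split => //; exists e.
Qed.

End Glue.

Lemma gbound_take (B : seq nat) k l' : (k < size B)%N -> (l' < (nth 0%N B k).-1)%N ->
  gbound B (sumn (map predn (take k B)) + l') = ((nth 0%N B k - l') * \prod_(c <- drop k.+1 B) c)%N.
Proof.
elim: B k => [|b B IH] [|k] //= hk hl.
  by rewrite add0n hl drop0.
have -> : (b.-1 + sumn [seq x.-1 | x <- take k B] + l' < b.-1)%N = false.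
  by apply/negbTE; rewrite -leqNgt -addnA leq_addr.
have -> : (b.-1 + sumn [seq x.-1 | x <- take k B] + l' - b.-1 =
           sumn [seq x.-1 | x <- take k B] + l')%N by lia.
exact: IH.
Qed.

Lemma sorted_iota_mono (f : nat -> nat) a m :
  (forall i, (a <= i)%N -> (i.+1 < a + m)%N -> (f i <= f i.+1)%N) -> sorted leq (map f (iota a m)).
Proof.
elim: m a => [|m IH] a h //=.
case: m IH h => [|m] IH h //=.
apply/andP; split; first by apply: h; lia.
have := IH a.+1; rewrite /= => -> // i h1 h2; apply: h; lia.
Qed.

Theorem corollary6p9 (K : finFieldType) (s : nat) (A : 'I_s -> {set K})
  (d k l : nat) :
  nested_cartesian A ->
  (1 <= d)%N -> (d <= \sum_(2 <= i < s.+1) (dsz A i).-1)%N ->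
  (k <= s - 2)%N -> (1 <= l)%N -> (l <= (dsz A (k + 2)).-1)%N ->
  d = (\sum_(2 <= i < k.+2) (dsz A i).-1 + l)%N ->
  let c := ((dsz A (k + 2) - l + 1) * \prod_(k + 3 <= i < s.+1) dsz A i)%N in
  let Ld := fun f : {mpoly K[s]} =>
    f \is d.-homog /\ (forall m, m \in msupp f -> (exists i : 'I_s, val i = 0%N /\ (0 < m i)%N)) in
  exists e : nat, is_hdeg (hilbX A) e /\
    (exists f : {mpoly K[s]}, Ld f /\ ~ in_IX A f /\ (#|VX A f| + c)%N = e) /\
    (forall f : {mpoly K[s]}, Ld f -> ~ in_IX A f -> (#|VX A f| + c <= e)%N).
Proof.
case: s A => [|n] A hA hd1 hdsum hk hl1 hl2 hdef c Ld.
  by move: hdsum; rewrite big_geq //; lia.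
have n0 : (0 < n)%N.
  case: n A hA hdsum {hk hl2 hdef c Ld} => // A hA; rewrite big_geq //; lia.
have h01 : forall i, (0 : K) \in A i by case: hA => h _ _ i; case: (h i).
have dszE (i : nat) (hi : (i.-1 < n.+1)%N) : dsz A i = #|A (Ordinal hi)|.
  by rewrite /dsz insubT.
have dsz_pos (i : nat) : (1 <= i <= n.+1)%N -> (0 < dsz A i)%N.
  move=> /andP[h1 h2]; have hi : (i.-1 < n.+1)%N by lia.
  by rewrite (dszE i hi); apply/card_gt0P; exists 0.
pose B := map (dsz A) (iota 2 n).
have hB : map (fun X : {set K} => #|X|) (Asr A) = B.
  rewrite /B /Asr -map_comp.
  have -> : iota 2 n = map (addn 2) (map val (enum 'I_n)) by rewrite val_enum_ord -iotaDl.
  rewrite -!map_comp; apply: eq_map => j /=.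
  have hj : ((2 + j).-1 < n.+1)%N by have := ltn_ord j; rewrite /=; lia.
  by rewrite (dszE _ hj); congr #|A _|; apply: val_inj; rewrite /= /bump /=; lia.
have hsorted : sorted leq B.
  apply: sorted_iota_mono => i h1 h2.
  have hi1 : (i.-1 < n.+1)%N by lia.
  have hi2 : (i.+1.-1 < n.+1)%N by lia.
  rewrite (dszE _ hi1) (dszE _ hi2); case: hA => _ _ hm; apply: hm => /=; lia.
have hpos : all (fun X : {set K} => (0 < #|X|)%N) (Asr A).
  by apply/allP => X /mapP[j _ ->]; apply/card_gt0P; exists 0.
have sB : size B = n by rewrite size_map size_iota.
have hkn : (k < n)%N by lia.
have nthB : nth 0%N B k = dsz A (k + 2).
  by rewrite (nth_map 0%N) ?size_iota // nth_iota // addnC.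
have hc : c = gbound B d.-1.
  have -> : d.-1 = (sumn (map predn (take k B)) + l.-1)%N.
    rewrite hdef /B -map_take take_iota (minn_idPl (ltnW hkn)) -map_comp sumnE big_map.
    rewrite /index_iota (_ : (k.+2 - 2 = k)%N); last by lia.
    have -> : (\sum_(j <- iota 2 k) (predn \o dsz A) j = \sum_(i <- iota 2 k) (dsz A i).-1)%N by [].
    have : (1 <= l)%N := hl1; lia.
  rewrite gbound_take ?sB // ?nthB; last by lia.
  rewrite /c /B -map_drop drop_iota big_map /index_iota.
  have -> : (2 + k.+1 = k + 3)%N by lia.
  have -> : (n - k.+1 = n.+2 - (k + 3))%N by lia.
  congr (_ * _)%N; lia.
have cpos : (0 < c)%N.
  rewrite /c muln_gt0 addn1 /= big_seq; apply: prodn_cond_gt0 => i; rewrite ?mem_index_iota ?mem_iota => hi.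
  apply: dsz_pos; lia.
set e := #|projX A|.
have Ldo f : Ld f -> f \is d.-homog /\ (forall m, m \in msupp f -> (0 < m ord0)%N).
  case=> hh hm; split => // m /hm [i [hi hmi]].
  by rewrite (_ : ord0 = i) //; apply: val_inj.
have [f [hLd hnI hcnt]] : exists f : {mpoly K[n.+1]}, [/\ Ld f, ~ in_IX A f & (#|VX A f| + c)%N = e].
  case: (AF_exact hpos d.-1) => F [[r [hr hF]] hcF].
  have hr' : forall p, p \in r -> (sumn p.2 <= d.-1)%N /\ (size p.2 <= n)%N.
    by move=> p /hr; rewrite /Asr size_map size_enum_ord.
  case: (lift_poly hd1 hr') => f [hh hm hf].
  have hcf : cnt (Asr A) (fun y => f.@[phi n y]) = c.
    rewrite hc -hB -hcF /cnt; apply: eq_bigr => y _; by rewrite hf hF.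
  exists f; split.
  - split => // m /hm hmo; by exists ord0.
  - move=> hI; have : (0 < cnt (Asr A) (fun y => f.@[phi n y]))%N by rewrite hcf.
    case/cnt_posP => y hy; move/eqP; apply; apply: (inIX_vanish hI); exact: phi_in.
  - by rewrite -hcf /e count_glue.
have e0 : (0 < e)%N by rewrite -hcnt; lia.
exists e; split; [|split].
- left; exists 1%N; split => //; split => // eps heps.
  exists (#|K|.-1 * n.+1).+1 => d' hd'; rewrite hilbX_eq //.
  by rewrite /= expr0 divr1 subrr normr0.
- by exists f.
- move=> g hLg hnJ; case: (Ldo g hLg) => hh hm.
  rewrite /e -(count_glue hA hm) leq_add2l hc -hB.
  apply: AF; first by rewrite hB.
    exact: polyfun_of hh hm.
  rewrite lt0n; apply/negP => /eqP h0; apply: hnJ; apply: (vanish_inIX hh) => x hx.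
  case: (eqVneq (x ord0) 0) => xo; first exact: vanish_o.
  case: (psi_in hA hx xo) => hy <-; exact: (cnt0P h0 hy).
Qed.
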